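(* Let $N$ be an odd prime and let $M=(N-1)/2$. Then for every integer $r$ with $0<r\le M$, the inverse problem $\mathrm{IP}(N,r,1)$ is uniquely solvable; that is, for any two distinct vectors ${\tt x},{\tt y}\in\Omega(N,r)$ one has $\tilde{x}_1\neq\tilde{y}_1$.
   Context: For a vector ${\tt v}=(v_1,\dots,v_N)$ of odd length $N>1$, its discrete Fourier transform (DFT) coefficients are $\tilde{v}_m=\sum_{n=1}^N v_n e^{\mathrm{i}\xi m n}$ with $\xi=2\pi/N$, for integers $m$. A vector is binary if all its entries are $0$ or $1$. $\Omega(N,r)$ denotes the set of binary vectors of length $N$ containing exactly $r$ ones (popcount $r$), so $\tilde{x}_0=r$ for ${\tt x}\in\Omega(N,r)$. For $1\le L\le M=(N-1)/2$, two vectors ${\tt x},{\tt y}\in\Omega(N,r)$ are called $L$-distinguishable if $\tilde{x}_m\neq\tilde{y}_m$ for some $m\in\{1,\dots,L\}$, and $L$-indistinguishable otherwise. The inverse problem $\mathrm{IP}(N,r,L)$ (recovering ${\tt x}\in\Omega(N,r)$ from $\tilde{x}_1,\dots,\tilde{x}_L$) is called uniquely solvable if all pairs of distinct vectors in $\Omega(N,r)$ are $L$-distinguishable. *)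

(* Defs.v *)
From Stdlib Require Import Reals List Arith ZArith Znumtheory.
From Coquelicot Require Import Coquelicot.
Open Scope R_scope.

Definition cis (theta : R) : C := (cos theta, sin theta).

(* A vector v = (v_1,...,v_N) of length N is a list of length N;
   v_n = nth (n-1) v.  Binary vectors are lists of booleans. *)
Definition b2R (b : bool) : R := if b then 1 else 0.

Fixpoint dft_aux (l : list bool) (k : nat) (theta : R) : C :=
  match l with
  | nil => RtoC 0
  | b :: l' => Cplus (Cmult (RtoC (b2R b)) (cis (theta * INR k))) (dft_aux l' (S k) theta)
  end.

(* DFT coefficient  \tilde v_m = sum_{n=1}^N v_n e^{i xi m n},  xi = 2 pi / N *)
Definition dft (N : nat) (v : list bool) (m : nat) : C :=
  dft_aux v 1 (2 * PI / INR N * INR m).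

Definition Omega (N r : nat) (x : list bool) : Prop :=
  length x = N /\ count_occ Bool.bool_dec x true = r.

(* Main.v *)
Require Import Defs.
From Stdlib Require Import Reals List Arith ZArith Znumtheory.
From Coquelicot Require Import Coquelicot.
From Stdlib Require Import Lia Lra.

Lemma theta_facts (N : nat) : (3 <= N)%nat ->
  let t := (2 * PI / INR N * INR 1)%R in
  (0 < sin t)%R /\ cos (t * INR N) = 1%R /\ sin (t * INR N) = 0%R.
Proof.
intros HN t.
assert (HN' : (3 <= INR N)%R) by (replace 3%R with (INR 3) by (simpl; lra); apply le_INR; lia).
assert (E : (t * INR N = 2 * PI)%R) by (unfold t; simpl; field; lra).
rewrite E, cos_2PI, sin_2PI. split; [|split; reflexivity].
apply sin_gt_0; unfold t; simpl.
- apply Rmult_lt_0_compat; [|lra]. apply Rdiv_lt_0_compat; [|lra]. pose proof PI_RGT_0; lra.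
- pose proof PI_RGT_0. rewrite Rmult_1_r. apply (Rmult_lt_reg_r (INR N)); [lra|].
  unfold Rdiv. rewrite Rmult_assoc, Rinv_l by lra. nra.
Qed.

Lemma prime_ssr_aux (N : nat) : prime (Z.of_nat N) ->
  (1 < N)%nat /\ forall d k : nat, N = (k * d)%nat -> d = 1%nat \/ d = N.
Proof.
intros HP. pose proof (prime_ge_2 _ HP) as H2. split; [lia|].
intros d k E.
assert (Hd : (Z.of_nat d | Z.of_nat N)%Z).
{ exists (Z.of_nat k). rewrite E, Nat2Z.inj_mul. ring. }
destruct (prime_divisors _ HP _ Hd) as [H|[H|[H|H]]]; lia.
Qed.

From HB Require structures.
From mathcomp Require all_boot all_order all_algebra all_field zify.
From mathcomp Require Rstruct complex.

Module Alg.
Import structures.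
Import all_boot all_order all_algebra all_field zify.
Import Rstruct complex.
Import Order.TTheory GRing.Theory Num.Theory.
Local Open Scope ring_scope.

Lemma Phi_prime (N : nat) : prime N -> ('X - 1) * 'Phi_N = 'X^N - 1 :> {poly int}.
Proof.
move=> pN; have N0 : (0 < N)%N by exact: prime_gt0.
have N1 : (1 < N)%N by exact: prime_gt1.
have D1 : 'Phi_1 = 'X - 1 :> {poly int}.
  by rewrite -(prod_Cyclotomic (ltn0Sn 0)) /= big_cons big_nil mulr1.
rewrite -(prod_Cyclotomic N0).
have pe : perm_eq (divisors N) [:: 1%N; N].
  apply: uniq_perm; first exact: divisors_uniq.
    by rewrite /= inE andbT; case: N N1 {pN N0} => [|[|]].
  move=> d; rewrite -dvdn_divisors // !inE.
  apply/idP/idP.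
    by move: pN => /primeP [_ H] /H.
  by case/orP=> /eqP ->; rewrite ?dvd1n ?dvdnn.
by rewrite (perm_big _ pe) /= big_cons big_cons big_nil mulr1 D1.
Qed.

Lemma Phi_at1 (N : nat) : prime N -> ('Phi_N).[1] = N%:R :> int.
Proof.
move=> pN.
have E : 'Phi_N = \sum_(i < N) 'X^(N.-1 - i) * 1 ^+ i :> {poly int}.
  apply: (@mulfI _ ('X - 1)); first by rewrite polyXsubC_eq0.
  by rewrite Phi_prime // -subrXX expr1n.
rewrite E horner_sum.
under eq_bigr => i _ do rewrite expr1n mulr1 hornerXn expr1n.
by rewrite sumr_const card_ord.
Qed.

Local Notation PhiQ N := (map_poly (intr : int -> rat) 'Phi_N).

Lemma PhiQ_dich (N : nat) (q : {poly rat}) : prime N ->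
  (PhiQ N %| q) || coprimep (PhiQ N) q.
Proof.
move=> pN; have N0 : (0 < N)%N by exact: prime_gt0.
rewrite coprimep_def; set g := gcdp _ q.
case: eqP => [_|g1]; first by rewrite orbT.
apply/orP; left.
have : size (map_poly (ratr : rat -> algC) g) != 1%N by rewrite size_map_poly; apply/eqP; exact: g1.
case/closed_rootP => w rw.
have mapPhi : map_poly (ratr : rat -> algC) (PhiQ N) = map_poly intr 'Phi_N.
  rewrite -map_poly_comp; apply: eq_map_poly => a /=; exact: ratr_int.
have rPw : root (map_poly intr 'Phi_N) w.
  rewrite -mapPhi; apply: root_dvdp rw; rewrite dvdp_map.
  exact: dvdp_gcdl.
have [z0 pz0] := C_prim_root_exists N0.
have pw : N.-primitive_root w.
  by move: rPw; rewrite (Cintr_Cyclotomic pz0) root_cyclotomic.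
have [p1 [Dp1 _] Hp1] := minCpolyP w.
have p1E : p1 = PhiQ N.
  apply: (map_inj_poly (fmorph_inj (ratr : {rmorphism rat -> algC}))); first exact: rmorph0.
  apply: (@eq_trans _ _ (minCpoly w)); first exact: (esym Dp1).
  rewrite (minCpoly_cyclotomic pw) -(Cintr_Cyclotomic pw); exact: (esym mapPhi).
have : p1 %| g by rewrite -Hp1.
rewrite p1E => H; apply: dvdp_trans H _; exact: dvdp_gcdr.
Qed.

Lemma natfact (N s : nat) : (0 < N)%N -> ((s + N).-1 <= N)%N -> (s <= 1)%N.
Proof. rewrite -subn1; lia. Qed.

Lemma core (N : nat) (F : numFieldType) (z : F) (q : {poly rat}) :
  prime N -> z ^+ N = 1 -> z != 1 -> (size q <= N)%N ->
  (map_poly (ratr : rat -> F) q).[z] = 0 -> q.[1] = 0 -> q = 0.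
Proof.
move=> pN zN z1 sq qz q1.
have mapPhi : map_poly (ratr : rat -> F) (PhiQ N) = map_poly intr 'Phi_N.
  rewrite -map_poly_comp; apply: eq_map_poly => a /=; exact: ratr_int.
have Phiz : (map_poly (ratr : rat -> F) (PhiQ N)).[z] = 0.
  rewrite mapPhi.
  have := congr1 (fun p : {poly int} => (map_poly (intr : int -> F) p).[z]) (Phi_prime _ pN).
  rewrite /= rmorphM !rmorphB /= map_polyX map_polyXn !rmorph1 hornerM !hornerE zN subrr.
  move/eqP; rewrite mulf_eq0 subr_eq0 (negbTE z1) /= => /eqP.
  done.
have /orP [dv | cop] := PhiQ_dich _ q pN; last first.
  have [[u v] /= E] := Bezout_eq1_coprimepP _ _ cop.
  have := congr1 (fun p => (map_poly (ratr : rat -> F) p).[z]) E.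
  rewrite /= rmorphD !rmorphM /= hornerD !hornerM Phiz qz !mulr0 addr0 rmorph1 hornerC.
  by move/eqP; rewrite eq_sym oner_eq0.
case/dvdpP: dv => k Dq.
have [k00|k0] := eqVneq k 0; first by rewrite Dq k00 mul0r.
have sPhi : size (PhiQ N) = N.
  rewrite size_map_inj_poly; first by rewrite size_Cyclotomic totient_prime // prednK // prime_gt0.
    exact: intr_inj.
  exact: rmorph0.
have Phi0 : PhiQ N != 0 by rewrite -size_poly_eq0 sPhi -lt0n prime_gt0.
have : (size k <= 1)%N.
  move: sq; rewrite Dq size_mul // sPhi.
  by apply: natfact; exact: prime_gt0.
move/size1_polyC => Dk.
have Phi1 : (PhiQ N).[1] != 0.
  rewrite -[1 in X in X != 0](rmorph1 (intr : {rmorphism int -> rat})) horner_map /= Phi_at1 // intr_eq0 pnatr_eq0 -lt0n prime_gt0 //.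
move: q1; rewrite Dq Dk hornerM hornerC => /eqP; rewrite mulf_eq0 (negbTE Phi1) orbF.
move/eqP => c0; move: k0; rewrite Dk c0 eqxx //.
Qed.


Local Open Scope complex_scope.

Definition toC (p : C) : Rdefinitions.R[i] := Complex (fst p) (snd p).

Lemma zpow (t : Rdefinitions.R) (n : nat) :
  (Complex (cos t) (sin t)) ^+ n = Complex (cos (t * INR n)) (sin (t * INR n)).
Proof.
elim: n => [|n IH].
  by rewrite expr0 /= Rmult_0_r cos_0 sin_0.
rewrite exprSr IH S_INR Rmult_plus_distr_l Rmult_1_r.
rewrite (sinD (t * INR n) t) (cosD (t * INR n) t).
by apply: (congr2 (@Complex _)) => //; apply: addrC.
Qed.

Lemma toC_dft_aux (t : Rdefinitions.R) (l : list bool) (k : nat) :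
  toC (dft_aux l k t) =
  \sum_(j < size l) ((b2R (nth false l j))%:C * (Complex (cos t) (sin t)) ^+ (k + j))%R.
Proof.
elim: l k => [|b l IH] k /=.
  by rewrite big_ord0.
rewrite big_ord_recl /= addn0.
under [X in _ = _ + X]eq_bigr => j _ do rewrite /bump /= add1n -addSnnS.
rewrite -IH zpow.
reflexivity.
Qed.


Lemma count_occ_count (x : list bool) : count_occ Bool.bool_dec x true = count id x.
Proof. by elim: x => [|b x IH] //=; case: b => /=; rewrite IH. Qed.

Lemma length_size (x : list bool) : length x = size x.
Proof. by elim: x => //= b x ->. Qed.

Lemma sum_count (x : list bool) :
  \sum_(j < size x) ((nth false x j : nat)%:R : rat) = (count id x)%:R.
Proof.
elim: x => [|b x IH]; first by rewrite big_ord0.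
rewrite big_ord_recl /=.
under eq_bigr => j _ do rewrite /bump /= ?add1n.
by rewrite IH -natrD.
Qed.

Lemma b2RC (b : bool) : (b2R b)%:C = (b : nat)%:R :> Rdefinitions.R[i].
Proof. by case: b. Qed.

Lemma alg_main (N : nat) (x y : list bool) :
  Znumtheory.prime (Z.of_nat N) -> Nat.Odd N -> length x = N -> length y = N ->
  count_occ Bool.bool_dec x true = count_occ Bool.bool_dec y true ->
  dft N x 1 = dft N y 1 -> x = y.
Proof.
move=> HP HO Lx Ly Cxy E.
have [N1 Hdiv] := prime_ssr_aux N HP.
have pN : prime N.
  apply/primeP; split; first by apply/ssrnat.ltP.
  move=> d /dvdnP [k Ek]; case: (Hdiv d k Ek) => ->; by rewrite eqxx ?orbT.
have N3 : (3 <= N)%coq_nat by case: HO => m Hm; lia.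
have [sinpos [cosN sinN]] := theta_facts N N3.
set t := (2 * PI / INR N * INR 1)%R in sinpos cosN sinN.
set z := Complex (cos t) (sin t).
have zN : z ^+ N = 1 by rewrite /z zpow cosN sinN.
have z1 : z != 1.
  apply/eqP => -[_ h]; move: sinpos; rewrite h => /Rlt_irrefl //.
have z0 : z != 0.
  apply/eqP => -[_ h]; move: sinpos; rewrite h => /Rlt_irrefl //.
have Sx : size x = N by rewrite -length_size.
have Sy : size y = N by rewrite -length_size.
pose q : {poly rat} := \poly_(j < N) ((nth false x j : nat)%:R - (nth false y j : nat)%:R).
have Hz : (map_poly (ratr : rat -> Rdefinitions.R[i]) q).[z] = 0.
  rewrite (@horner_coef_wide _ N); last by rewrite size_map_poly size_poly.
  under eq_bigr => j _ do rewrite coef_map coef_poly ltn_ord /= rmorphB !rmorph_nat.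
  have E' := congr1 toC E; rewrite /dft !toC_dft_aux Sx Sy -/t -/z in E'.
  have : (\sum_(j < N) (((nth false x j : nat)%:R - (nth false y j : nat)%:R) * z ^+ j)) * z = 0.
    rewrite mulr_suml.
    under eq_bigr => j _ do rewrite -mulrA -exprSr mulrBl.
    rewrite sumrB; apply/eqP; rewrite subr_eq0; apply/eqP.
    move: E'; under eq_bigr => j _ do rewrite b2RC add1n.
    by under [X in _ = X -> _]eq_bigr => j _ do rewrite b2RC add1n.
  by move/eqP; rewrite mulf_eq0 (negbTE z0) orbF => /eqP.
have H1 : q.[1] = 0.
  rewrite (@horner_coef_wide _ N); last by rewrite size_poly.
  under eq_bigr => j _ do rewrite coef_poly ltn_ord expr1n mulr1.
  have SC : forall v : list bool, size v = N ->
      \sum_(j < N) ((nth false v j : nat)%:R : rat) = (count id v)%:R.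
    by move=> v <-; exact: sum_count.
  rewrite sumrB !SC // -!count_occ_count Cxy.
  exact: subrr.
have q0 := @core N _ z q pN zN z1 (size_poly _ _) Hz H1.
apply: (@eq_from_nth _ false); first by rewrite Sx Sy.
rewrite Sx => j jN.
have := congr1 (fun p : {poly rat} => p`_j) q0.
rewrite /= coef_poly jN coef0 => /eqP; rewrite subr_eq0 eqr_nat.
by case: (nth false x j); case: (nth false y j).
Qed.

End Alg.

Theorem theorem1 (N r : nat) :
  prime (Z.of_nat N) -> Nat.Odd N ->
  (0 < r)%nat -> (r <= (N - 1) / 2)%nat ->
  forall x y : list bool, Omega N r x -> Omega N r y -> x <> y ->
  dft N x 1 <> dft N y 1.
Proof.
intros HP HO _ _ x y [Lx Cx] [Ly Cy] Hne E.
apply Hne. apply (Alg.alg_main N x y HP HO Lx Ly); [congruence | exact E].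
Qed.
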